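(* Let $d\ge 3$ and let $K_d$ be the complete graph on the vertex set $\{1,\ldots,d\}$. Let $\alpha\in\mathbb{C}$ be a root of the Ehrhart polynomial $i(\mathcal{P}_{K_d},m)$ of the edge polytope $\mathcal{P}_{K_d}$. Then (1) if $d=3$, then $\alpha\in\{-1,-2\}$; (2) if $d\ge 4$, then $-\tfrac{d}{2}<\operatorname{Re}(\alpha)<0$.
   Context: For a graph $G$ on vertex set $\{1,\ldots,d\}$ with edge set $E(G)$, and an edge $e=\{i,j\}$, set $\rho(e)=\mathbf{e}_i+\mathbf{e}_j\in\mathbb{R}^d$, where $\mathbf{e}_i$ is the $i$-th unit coordinate vector. The edge polytope $\mathcal{P}_G$ is the convex hull of $\{\rho(e): e\in E(G)\}$. For an integral convex polytope $\mathcal{P}\subset\mathbb{R}^N$, its Ehrhart polynomial is the polynomial $i(\mathcal{P},m)$ satisfying $i(\mathcal{P},m)=\#(m\mathcal{P}\cap\mathbb{Z}^N)$ for all integers $m\ge 0$. *)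

(* Defs.v *)
From HB Require Import structures.
From mathcomp Require Import all_boot all_order all_algebra all_field.
From mathcomp Require Import reals.
Set Implicit Arguments. Unset Strict Implicit. Unset Printing Implicit Defensive.
Import Order.TTheory GRing.Theory Num.Theory.
Local Open Scope ring_scope.

(* Vertex set {1,...,d} is modelled by 'I_d; vectors of R^d by functions 'I_d -> R. *)

Definition rho (R : realType) (d : nat) (i j : 'I_d) : 'I_d -> R :=
  fun k => (k == i)%:R + (k == j)%:R.

(* x lies in m * P_{K_d}, where P_{K_d} = conv{rho(e) : e edge of K_d};
   edges of the complete graph K_d are the pairs {i,j} with i < j;
   m * P = { m y | y in P }, and y in P iff y is a convex combination
   of the rho(e). *)
Definition in_dilated_edge_polytope_Kd (R : realType) (d m : nat)
    (x : 'I_d -> R) : Prop :=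
  exists lam : 'I_d -> 'I_d -> R,
    [/\ (forall i j : 'I_d, 0 <= lam i j),
        (forall i j : 'I_d, ~~ (i < j)%N -> lam i j = 0),
        \sum_(i < d) \sum_(j < d) lam i j = 1 &
        (forall k : 'I_d, x k = m%:R * \sum_(i < d) \sum_(j < d) lam i j * rho R i j k)].

Definition lattice_point_Kd (R : realType) (d m : nat) (x : {ffun 'I_d -> int}) : Prop :=
  @in_dilated_edge_polytope_Kd R d m (fun k => (x k)%:~R).

(* p is the Ehrhart polynomial of P_{K_d}: for every integer m >= 0,
   p(m) = #(m P_{K_d} ∩ Z^d) (the lattice points form a finite set,
   enumerated without repetition by s). *)
Definition is_ehrhart_poly_Kd (R : realType) (d : nat) (p : {poly algC}) : Prop :=
  forall m : nat, exists s : seq {ffun 'I_d -> int},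
    [/\ uniq s,
        (forall x, x \in s <-> @lattice_point_Kd R d m x) &
        p.[m%:R] = (size s)%:R].

(* Main.v *)
Require Import Defs.
From HB Require Import structures.
From mathcomp Require Import all_boot all_order all_algebra all_field.
From mathcomp Require Import reals.
From mathcomp Require Import ring zify.
Import Order.TTheory GRing.Theory Num.Theory.
Local Open Scope ring_scope.
Local Open Scope ring_scope.

Lemma Lsq (z c : algC) : c \is Num.real ->
  `|z + c| ^+ 2 = `|z| ^+ 2 + 2 * c * 'Re z + c ^+ 2.
Proof.
move=> cR; rewrite !normCK rmorphD /= (CrealP cR) ReE.
have h2 : (2 : algC) != 0 by rewrite pnatr_eq0.
by field.
Qed.

Lemma ReDr (z c : algC) : c \is Num.real -> 'Re (z + c) = 'Re z + c.
Proof. by move=> cR; rewrite raddfD /=; congr (_ + _); apply/Creal_ReP. Qed.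

Lemma nnegN (x : algC) : 0 <= x -> x \is Num.nneg.
Proof. by rewrite qualifE. Qed.

Lemma Lmono (z c e : algC) : 0 <= 'Re z -> c \is Num.real -> `|c| <= e ->
  `|z + c| <= `|z + e|.
Proof.
move=> Hz cR ce.
have e0 : 0 <= e by apply: le_trans ce.
have eR : e \is Num.real by apply: ger0_real.
rewrite -(ler_pXn2r (n:=2)) ?nnegN ?normr_ge0 // !Lsq //.
rewrite -addrA -[X in _ <= X]addrA lerD2l lerD //.
  rewrite -!mulrA ler_wpM2l ?ler0n // ler_wpM2r //.
  exact: le_trans (real_ler_norm cR) ce.
by rewrite -(real_normK cR) ler_pXn2r ?nnegN ?normr_ge0.
Qed.

Lemma Lratio (z a b : algC) : 0 <= 'Re z -> 0 <= b -> b <= a ->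
  b * `|z + a| <= a * `|z + b|.
Proof.
move=> Hz b0 ba.
have a0 : 0 <= a by apply: le_trans ba.
have aR : a \is Num.real by apply: ger0_real.
have bR : b \is Num.real by apply: ger0_real.
rewrite -(ler_pXn2r (n:=2)) ?nnegN ?mulr_ge0 ?normr_ge0 // !exprMn !Lsq //.
rewrite -subr_ge0.
have -> : a ^+ 2 * (`|z| ^+ 2 + 2 * b * 'Re z + b ^+ 2) -
  b ^+ 2 * (`|z| ^+ 2 + 2 * a * 'Re z + a ^+ 2) =
  (a ^+ 2 - b ^+ 2) * `|z| ^+ 2 + 2 * a * b * (a - b) * 'Re z by ring.
have h1 : 0 <= a - b by rewrite subr_ge0.
have h2 : 0 <= a ^+ 2 - b ^+ 2 by rewrite subr_ge0 ler_pXn2r ?nnegN.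
by rewrite addr_ge0 // mulr_ge0 // ?exprn_ge0 ?normr_ge0 // !mulr_ge0 // ler0n.
Qed.

Lemma Lstrict (z : algC) : 0 <= 'Re z -> `|z| < `|z + 1|.
Proof.
move=> Hz; rewrite -(ltr_pXn2r (n:=2)) ?nnegN ?normr_ge0 // Lsq ?realn //.
rewrite -addrA ltrDl mulr1.
by rewrite expr1n ltr_wpDl ?ltr01 // mulr_ge0 ?ler0n.
Qed.

Lemma Lnz (z c : algC) : 0 <= 'Re z -> 0 < c -> 0 < `|z + c|.
Proof.
move=> Hz c0; rewrite normr_gt0; apply/eqP => h.
have := congr1 (@Re _) h; rewrite ReDr ?gtr0_real // raddf0 => h'.
by move: (ltr_wpDl Hz c0); rewrite h' ltxx.
Qed.

Definition Aof (z : algC) n := \prod_(0 <= i < n) `|z + i.+1%:R|.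
Definition Bof (z : algC) n := \prod_(0 <= i < n) `|z + (2*i)%:R|.
Definition Qof (z : algC) n := \prod_(0 <= i < n) `|z + (n%:R - (2*i)%:R)|.
Definition Mof (z : algC) n := \prod_(0 <= i < n) `|z + (n.+1%:R - (2*i)%:R)|.

Lemma Aof_ge0 z n : 0 <= Aof z n.
Proof. by apply: prodr_ge0 => i _; exact: normr_ge0. Qed.
Lemma Bof_ge0 z n : 0 <= Bof z n.
Proof. by apply: prodr_ge0 => i _; exact: normr_ge0. Qed.
Lemma Aof_gt0 z n : 0 <= 'Re z -> 0 < Aof z n.
Proof. by move=> Hz; apply: prodr_gt0 => i _; apply: Lnz; rewrite ?ltr0Sn. Qed.

Lemma claim1 z k : 0 <= 'Re z ->
  k.+1%:R * Bof z k.+1 * `|z + 1| <= 2 ^+ k * `|z| * Aof z k.+1.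
Proof.
move=> Hz; elim: k => [|k IH].
  by rewrite /Aof /Bof !big_nat1 /= mul1r expr0 mul1r addr0.
rewrite /Aof /Bof big_nat_recr //= [X in _ <= _ * _ * X]big_nat_recr //=.
rewrite -/(Aof z k.+1) -/(Bof z k.+1).
have kp : (0 : algC) < k.+1%:R by rewrite ltr0Sn.
rewrite -(ler_pM2l kp).
have -> : k.+1%:R * (k.+2%:R * (Bof z k.+1 * `|z + (2 * k.+1)%:R|) * `|z + 1|)
  = (k.+1%:R * Bof z k.+1 * `|z + 1|) * (k.+2%:R * `|z + (2 * k.+1)%:R|) by ring.
have -> : k.+1%:R * (2 ^+ k.+1 * `|z| * (Aof z k.+1 * `|z + k.+2%:R|))
  = (2 ^+ k * `|z| * Aof z k.+1) * ((2 * k.+1)%:R * `|z + k.+2%:R|)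
  by rewrite natrM exprS; ring.
apply: ler_pM => //.
- by rewrite !mulr_ge0 ?ler0n ?normr_ge0 ?Bof_ge0.
- by rewrite !mulr_ge0 ?ler0n ?normr_ge0.
- apply: Lratio => //.
  by rewrite ler_nat; lia.
Qed.

Lemma part1_ineq z n : 0 <= 'Re z -> (1 <= n)%N ->
  2 ^+ n * Aof z n <> n.+1%:R * Bof z n.
Proof.
move=> Hz; case: n => // k _ E.
have H := claim1 z k Hz.
have A0 := Aof_gt0 z k.+1 Hz.

have h : 2 ^+ k * ((2 * k.+1)%:R * `|z + 1| * Aof z k.+1) <=
         2 ^+ k * (k.+2%:R * `|z| * Aof z k.+1).
  have -> : 2 ^+ k * ((2 * k.+1)%:R * `|z + 1| * Aof z k.+1) =
     k.+1%:R * (2 ^+ k.+1 * Aof z k.+1) * `|z + 1| by rewrite natrM exprS; ring.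
  rewrite E.
  have -> : k.+1%:R * (k.+2%:R * Bof z k.+1) * `|z + 1| =
     k.+2%:R * (k.+1%:R * Bof z k.+1 * `|z + 1|) by ring.
  have -> : 2 ^+ k * (k.+2%:R * `|z| * Aof z k.+1) =
     k.+2%:R * (2 ^+ k * `|z| * Aof z k.+1) by ring.
  by rewrite ler_pM2l ?ltr0Sn.
rewrite ler_pM2l ?exprn_gt0 ?ltr0Sn // ler_pM2r // in h.
have h2 : k.+2%:R * `|z| <= (2 * k.+1)%:R * `|z|.
  by rewrite ler_wpM2r ?normr_ge0 // ler_nat; lia.
have h3 : (2 * k.+1)%:R * `|z| < (2 * k.+1)%:R * `|z + 1|.
  by rewrite ltr_pM2l ?ltr0n ?muln_gt0 //; apply: Lstrict.
by move: (le_lt_trans (le_trans h h2) h3); rewrite ltxx.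
Qed.

Lemma shift2 (n i : nat) :
  (n.+2%:R - (2 * i.+1)%:R : algC) = n%:R - (2 * i)%:R.
Proof. by rewrite !natrM -(addn2 n) -(addn1 i) !natrD; ring. Qed.

Lemma Qof_le z n : 0 <= 'Re z -> Qof z n <= Aof z n /\ Qof z n.+1 <= Aof z n.+1.
Proof.
move=> Hz; elim: n => [|n [IH1 IH2]].
  rewrite /Qof /Aof big_geq // big_geq // !big_nat1 muln0 subr0.
  by split.
split => //.
rewrite /Qof /Aof big_nat_recl // big_nat_recr //= big_nat_recr //= big_nat_recr //=.
rewrite muln0 subr0.
under eq_bigr do rewrite shift2.
rewrite -/(Qof z n) -/(Aof z n).
have h1 : `|z + (n.+2%:R - (2 * n.+1)%:R)| <= `|z + n.+1%:R|.
  apply: Lmono => //; first by rewrite realB ?realn.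
  rewrite shift2.
  have -> : (n%:R - (2 * n)%:R : algC) = - n%:R by rewrite natrM; ring.
  by rewrite normrN normr_nat ler_nat.
rewrite [X in _ <= X]mulrC ler_wpM2l ?normr_ge0 //.
apply: ler_pM => //.
by apply: prodr_ge0 => i _; exact: normr_ge0.
Qed.

Lemma Mof_eq z k : Mof z k.+1 = `|z + k.+2%:R| * Qof z k.
Proof.
rewrite /Mof big_nat_recl // muln0 subr0; congr (_ * _).
by apply: eq_bigr => i _; rewrite shift2.
Qed.

Lemma nat_ineq k : (2 <= k)%N -> (k.+2 ^ 2 < k.+1 * 2 ^ k.+1)%N.
Proof.
elim: k => // k IH; rewrite leq_eqVlt => /orP [/eqP <- // | h].
have := IH h; rewrite [(2 ^ k.+2)%N]expnS.
move: (2 ^ k.+1)%N => X; rewrite !expnS expn0 !muln1 => H.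
have H2 : (k.+3 * k.+3 <= 2 * (k.+2 * k.+2))%N by nia.
nia.
Qed.

Lemma claim2 z k : 0 <= 'Re z ->
  k.+1%:R * Mof z k.+1 <= k.+2%:R * Aof z k.+1.
Proof.
move=> Hz; rewrite Mof_eq /Aof big_nat_recr //= -/(Aof z k).
have [_ Q] := Qof_le z k Hz.
have h : k.+1%:R * `|z + k.+2%:R| <= k.+2%:R * `|z + k.+1%:R|.
  by apply: Lratio => //; rewrite ?ler0n // ler_nat.
have -> : k.+1%:R * (`|z + k.+2%:R| * Qof z k) = (k.+1%:R * `|z + k.+2%:R|) * Qof z k by ring.
have -> : k.+2%:R * (Aof z k * `|z + k.+1%:R|) = (k.+2%:R * `|z + k.+1%:R|) * Aof z k by ring.
apply: ler_pM => //.
- by rewrite mulr_ge0 ?ler0n ?normr_ge0.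
- by apply: prodr_ge0 => i _; exact: normr_ge0.
- have [Q1 _] := Qof_le z k Hz; done.
Qed.

Lemma part2_ineq z k : 0 <= 'Re z -> (2 <= k)%N ->
  2 ^+ k.+1 * Aof z k.+1 <> k.+2%:R * Mof z k.+1.
Proof.
move=> Hz k2 E.
have A0 := Aof_gt0 z k.+1 Hz.
have h : (k.+1 * 2 ^ k.+1)%:R * Aof z k.+1 <= (k.+2 ^ 2)%:R * Aof z k.+1.
  rewrite natrM natrX -mulrA E.
  have -> : k.+1%:R * (k.+2%:R * Mof z k.+1) = k.+2%:R * (k.+1%:R * Mof z k.+1) by ring.
  rewrite natrX expr2 -mulrA ler_pM2l ?ltr0Sn //; exact: claim2.
rewrite ler_pM2r // ler_nat in h.
by move: (nat_ineq k k2); rewrite ltnNge h.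
Qed.

Definition P1p n : {poly algC} := \prod_(0 <= i < n) ('X *+ 2 + (i.+1%:R)%:P).
Definition P2p n : {poly algC} := \prod_(0 <= i < n) ('X + (i%:R)%:P).
Definition qp n : {poly algC} := (n`!%:R)^-1 *: (P1p n - n.+1%:R *: P2p n).

Lemma qp_horner n (x : algC) : (qp n).[x] = (n`!%:R)^-1 *
  (\prod_(0 <= i < n) (x *+ 2 + i.+1%:R) - n.+1%:R * \prod_(0 <= i < n) (x + i%:R)).
Proof.
rewrite /qp /P1p /P2p hornerZ hornerD hornerN hornerZ !horner_prod.
by congr (_ * (_ - _ * _)); apply: eq_bigr => i _; rewrite !hornerE.
Qed.

Lemma root_qp n a : root (qp n) a ->
  \prod_(0 <= i < n) (a *+ 2 + i.+1%:R) = n.+1%:R * \prod_(0 <= i < n) (a + i%:R).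
Proof.
rewrite rootE qp_horner mulf_eq0 invr_eq0 pnatr_eq0 eqn0Ngt fact_gt0 /=.
by rewrite subr_eq0 => /eqP.
Qed.

Lemma re_neg n a : (1 <= n)%N -> root (qp n) a -> 'Re a < 0.
Proof.
move=> n1 /root_qp E.
rewrite real_ltNge ?Creal_Re ?real0 //; apply/negP => Ha.
have Hz : 0 <= 'Re (a *+ 2) by rewrite raddfMn /= mulrn_wge0.
apply: (part1_ineq _ _ Hz n1).
have h1 : Aof (a *+ 2) n = `|\prod_(0 <= i < n) (a *+ 2 + i.+1%:R)|.
  by rewrite normr_prod.
have h2 : Bof (a *+ 2) n = `|2 ^+ n * \prod_(0 <= i < n) (a + i%:R)|.
  rewrite -[n in 2 ^+ n]subn0 -prodr_const_nat -big_split normr_prod.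
  by apply: eq_bigr => i _; rewrite natrM; congr (`|_|); simpl; ring.
rewrite h1 h2 E !normrM.
rewrite normrX !normr_nat; ring.
Qed.

Lemma re_gt k a : (2 <= k)%N -> root (qp k.+1) a -> - (k.+2%:R / 2) < 'Re a.
Proof.
move=> k2 /root_qp E.
rewrite real_ltNge ?Creal_Re ?realN ?realM ?realV ?realn //; apply/negP => Ha.
pose z := - (a *+ 2) - k.+2%:R.
have Hz : 0 <= 'Re z.
  rewrite /z raddfB raddfN raddfMn /=.
  have -> : 'Re (k.+2%:R : algC) = k.+2%:R by apply/Creal_ReP; rewrite realn.
  have H2 := ler_wpM2r (ler0n algC 2) Ha.
  rewrite /= mulNr divfK ?pnatr_eq0 // in H2.
  by rewrite subr_ge0 lerNr; rewrite mulr_natr in H2.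
apply: (part2_ineq _ _ Hz k2).
have hA : Aof z k.+1 = `|\prod_(0 <= i < k.+1) (a *+ 2 + i.+1%:R)|.
  rewrite normr_prod /Aof big_nat_rev /=; apply: eq_big_nat => i /andP[_ hi].
  rewrite add0n -normrN; congr `|_|; rewrite /z.
  have -> : ((k.+1 - i.+1).+1)%:R = k.+1%:R - i%:R :> algC.
    by rewrite -natrB ?(ltnW hi) //; congr (_%:R); lia.
  rewrite -[k.+2%:R]natr1 -[k.+1%:R]natr1 -[i.+1%:R]natr1; ring.
have hM : Mof z k.+1 = `|2 ^+ k.+1 * \prod_(0 <= i < k.+1) (a + i%:R)|.
  have -> : (2 : algC) ^+ k.+1 = \prod_(0 <= i < k.+1) 2 by rewrite prodr_const_nat subn0.
  rewrite -big_split normr_prod.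
  apply: eq_bigr => i _; rewrite -normrN; congr `|_|; rewrite /z natrM /=.
  rewrite -[k.+2%:R]natr1 -[k.+1%:R]natr1; ring.
rewrite hA hM E !normrM normrX !normr_nat; ring.
Qed.

Lemma roots3 a : root (qp 2) a -> a = -1 \/ a = -2.
Proof.
move=> /root_qp E.
rewrite !big_nat_recl // !big_geq // in E.
have h : (a + 1) * (a + 2) = 0.
  have -> : (a + 1) * (a + 2) = (a *+ 2 + 0.+1%:R) * ((a *+ 2 + 1.+1%:R) * 1)
     - 3%:R * ((a + 0%:R) * ((a + 1%:R) * 1)) by ring.
  by rewrite E subrr.
move/eqP: h; rewrite mulf_eq0 => /orP [/eqP h | /eqP h].
  by left; rewrite -(addrK 1 a) h sub0r.
by right; rewrite -(addrK 2 a) h sub0r.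
Qed.

Lemma sum_ind (R : pzSemiRingType) d (a : 'I_d) (F : 'I_d -> R) :
  \sum_i (i == a)%:R * F i = F a.
Proof.
rewrite (bigD1 a) //= eqxx mul1r big1 ?addr0 // => i /negbTE ->.
by rewrite mul0r.
Qed.

Lemma sum_ind1 (R : pzSemiRingType) d (a : 'I_d) :
  \sum_i ((i == a)%:R : R) = 1.
Proof.
have := @sum_ind R d a (fun _ => 1).
by under eq_bigr do rewrite mulr1.
Qed.

Lemma lp_fwd (R : realType) d m (x : {ffun 'I_d -> int}) :
  @lattice_point_Kd R d m x ->
  (forall k, 0 <= x k <= m%:Z) /\ \sum_k x k = (2 * m)%:Z.
Proof.
case=> lam [H0 Hlt Hs Hx].
pose S k := \sum_i \sum_j lam i j * rho R i j k.
have rho0 i j k : 0 <= rho R i j k by rewrite /rho addr_ge0 ?ler0n.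
have S0 k : 0 <= S k.
  by apply: sumr_ge0 => i _; apply: sumr_ge0 => j _; rewrite mulr_ge0.
have S1 k : S k <= 1.
  rewrite -Hs; apply: ler_sum => i _; apply: ler_sum => j _.
  case: (ltnP i j) => hij; last by rewrite Hlt ?mul0r // -leqNgt.
  rewrite -[X in _ <= X]mulr1 ler_wpM2l //.
  rewrite /rho -natrD lern1.
  case: (k =P i) => [-> | _] /=; last by case: (k == j).
  by case: (i =P j) hij => // ->; rewrite ltnn.
have Ssum : \sum_k S k = 2.
  rewrite /S exchange_big /=.
  under eq_bigr do rewrite exchange_big /=.
  rewrite -Hs -sumrMnl; apply: eq_bigr => i _.
  rewrite -sumrMnl; apply: eq_bigr => j _.
  rewrite -mulr_sumr /rho big_split /= !sum_ind1 mulrC; ring.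
have xk k : (x k)%:~R = m%:R * S k :> R by rewrite Hx.
split.
  move=> k; rewrite -(ler0z R) -(ler_int R) xk mulr_ge0 ?ler0n //=.
  by rewrite -[X in _ <= X]mulr1 ler_wpM2l ?ler0n.
apply: (@intr_inj R); rewrite raddf_sum /=.
under eq_bigr do rewrite xk.
by rewrite -mulr_sumr Ssum mulrC -natrM.
Qed.

Lemma key_pair d (i0 : 'I_d) (L : seq 'I_d) m (t : nat) :
  sorted (fun a b : 'I_d => (a <= b)%N) L -> size L = (2 * m)%N ->
  (forall k, count_mem k L <= m)%N -> (t < m)%N ->
  (nth i0 L t < nth i0 L (m + t))%N.
Proof.
move=> so sz cnt tm.
have tr : transitive (fun a b : 'I_d => (a <= b)%N).
  by move=> a b c; apply: leq_trans.
have rf : reflexive (fun a b : 'I_d => (a <= b)%N) by move=> a; exact: leqnn.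
have mono u v : (u <= v)%N -> (v < 2 * m)%N -> (nth i0 L u <= nth i0 L v)%N.
  move=> uv v2; apply: (sorted_leq_nth tr rf i0 so) => //; rewrite inE sz //.
  exact: leq_ltn_trans uv v2.
have le : (nth i0 L t <= nth i0 L (m + t))%N by apply: mono; lia.
rewrite ltn_neqAle le andbT; apply/negP => /eqP E.
set k := nth i0 L t.
pose S := take m.+1 (drop t L).
have szS : size S = m.+1 by rewrite size_takel // size_drop sz; lia.
have allS : all (pred1 k) S.
  apply/(all_nthP i0) => u; rewrite szS ltnS => hu.
  rewrite /S nth_take // nth_drop /=; apply/eqP/val_inj => /=.
  apply/eqP; rewrite eqn_leq; apply/andP; split.
    by rewrite /k E; apply: mono; lia.
  by apply: mono; lia.
have cS : count_mem k S = m.+1 by move: allS; rewrite all_count szS => /eqP.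
have := cnt k.
rewrite -(cat_take_drop t L) -(cat_take_drop m.+1 (drop t L)) !count_cat -/S cS.
lia.
Qed.

Lemma sum_indT (T : finType) (R : pzSemiRingType) (a : T) (F : T -> R) :
  \sum_i (i == a)%:R * F i = F a.
Proof.
rewrite (bigD1 a) //= eqxx mul1r big1 ?addr0 // => i /negbTE ->.
by rewrite mul0r.
Qed.

Lemma sum_count (T : finType) (R : pzSemiRingType) (s : seq T) (F : T -> R) :
  \sum_p (count_mem p s)%:R * F p = \sum_(z <- s) F z.
Proof.
elim: s => [|z s IH]; first by rewrite big_nil big1 // => p _; rewrite mul0r.
rewrite big_cons -IH -(@sum_indT T R z F) -big_split /=.
by apply: eq_bigr => p _; rewrite natrD mulrDl eq_sym.
Qed.

Lemma sum_seq_nat (T : Type) (R : pzSemiRingType) (s : seq T) (P : pred T) :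
  \sum_(z <- s) ((P z)%:R : R) = (count P s)%:R.
Proof.
elim: s => [|z s IH]; first by rewrite big_nil.
by rewrite big_cons IH /= natrD.
Qed.

Lemma lp_bwd (R : realType) d m (x : {ffun 'I_d -> int}) : (1 < d)%N ->
  (forall k, 0 <= x k <= m%:Z) -> \sum_k x k = (2 * m)%N ->
  @lattice_point_Kd R d m x.
Proof.
move=> d2 Hb Hs.
have d0 : (0 < d)%N by apply: ltn_trans d2.
pose i0 : 'I_d := Ordinal d0.
pose i1 : 'I_d := Ordinal d2.
case: (posnP m) => [m0 | mpos].
  exists (fun i j => (i == i0)%:R * (j == i1)%:R); split.
  - by move=> i j; rewrite mulr_ge0 ?ler0n.
  - move=> i j hij; case: (i =P i0) => [ei|]; last by rewrite mul0r.
    case: (j =P i1) => [ej|]; last by rewrite mulr0.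
    by move: hij; rewrite ei ej.
  - under eq_bigr do rewrite -mulr_sumr sum_ind1 mulr1.
    exact: sum_ind1.
  - move=> k; have : x k = 0.
      by apply/eqP; rewrite eq_le; move: (Hb k); rewrite m0 andbC.
    by move=> ->; rewrite m0 mul0r.
pose leo := fun a b : 'I_d => (a <= b)%N.
pose L0 := flatten [seq nseq `|x k|%N k | k <- enum 'I_d].
pose L := sort leo L0.
have xabs k : (`|x k|%N)%:Z = x k by rewrite gez0_abs //; case/andP: (Hb k).
have cL0 k : count_mem k L0 = `|x k|%N.
  rewrite /L0 count_flatten -map_comp.
  under eq_map do rewrite /= count_nseq.
  rewrite sumnE big_map big_enum /=.
  rewrite (bigD1 k) //= eqxx mul1n big1 ?addn0 // => i /negbTE.
  by rewrite eq_sym => ->.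
have pe : perm_eq L L0 by rewrite /L perm_sort perm_refl.
have cL k : count_mem k L = `|x k|%N by rewrite -cL0; exact: (permP pe).
have szL : size L = (2 * m)%N.
  rewrite /L size_sort /L0 size_flatten /shape -map_comp.
  under eq_map do rewrite /= size_nseq.
  rewrite sumnE big_map big_enum /=.
  apply/eqP; rewrite -eqz_nat -Hs.
  rewrite (big_morph Posz PoszD (erefl _)).
  by apply/eqP/eq_bigr => k _; rewrite xabs.
have so : sorted leo L by apply: sort_sorted => a b; exact: leq_total.
have cm k : (count_mem k L <= m)%N.
  by rewrite cL -lez_nat xabs; case/andP: (Hb k).
pose Z := zip (take m L) (drop m L).
have szt : size (take m L) = m by rewrite size_takel // szL; lia.
have szd : size (drop m L) = m by rewrite size_drop szL; lia.
have szZ : size Z = m by rewrite size_zip szt szd minnn.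
have F3 p : p \in Z -> (p.1 < p.2)%N.
  move=> /(nthP (i0, i0)) [t ht <-].
  rewrite szZ in ht.
  have K := @key_pair d i0 L m t so szL cm ht.
  rewrite -(nth_take i0 ht) -nth_drop in K.
  rewrite nth_zip; last by rewrite szt szd.
  exact: K.
have mR : (m%:R : R) != 0 by rewrite pnatr_eq0 -lt0n.
exists (fun i j => (count_mem (i, j) Z)%:R / m%:R); split.
- by move=> i j; rewrite divr_ge0 ?ler0n.
- move=> i j hij; suff -> : count_mem (i, j) Z = 0%N by rewrite mul0r.
  by apply/count_memPn/negP => /F3 /= h; rewrite h in hij.
- rewrite pair_bigA /=.
  under eq_bigr => p _ do rewrite -surjective_pairing.
  rewrite (@sum_count _ R Z (fun _ => m%:R^-1)).
  have -> : \sum_(z <- Z) m%:R^-1 = \sum_(z <- Z) ((predT z)%:R * (m%:R : R)^-1).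
    by apply: eq_bigr => z _; rewrite /= mul1r.
  by rewrite -mulr_suml sum_seq_nat count_predT szZ mulfV.
- move=> k.
  rewrite pair_bigA /=.
  under eq_bigr => p _ do rewrite -surjective_pairing -mulrA.
  rewrite (@sum_count _ R Z (fun p => m%:R^-1 * rho R p.1 p.2 k)).
  rewrite mulr_sumr.
  under eq_bigr do rewrite mulrA mulfV // mul1r.
  rewrite /rho big_split /=.
  rewrite (@sum_seq_nat _ R Z (fun z => k == z.1)) (@sum_seq_nat _ R Z (fun z => k == z.2)).
  have c1 : count (fun z : 'I_d * 'I_d => k == z.1) Z = count_mem k (take m L).
    rewrite -(@unzip1_zip _ _ (take m L) (drop m L)) ?szt ?szd // count_map.
    by apply: eq_count => z; rewrite /= eq_sym.
  have c2 : count (fun z : 'I_d * 'I_d => k == z.2) Z = count_mem k (drop m L).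
    rewrite -(@unzip2_zip _ _ (take m L) (drop m L)) ?szt ?szd // count_map.
    by apply: eq_count => z; rewrite /= eq_sym.
  rewrite c1 c2 -natrD -count_cat cat_take_drop cL.
  by rewrite -{1}xabs.
Qed.
Local Close Scope ring_scope.

Definition tsum n N (t : n.-tuple 'I_N) := \sum_(k < n) (tnth t k : nat).
Arguments tsum {n N} t.

Lemma tsumE n N (t : n.-tuple 'I_N) : \sum_(i <- t) (i : nat) = tsum t.
Proof. by rewrite big_tuple. Qed.

Lemma sum_two n (f : 'I_n -> nat) i j : i != j -> f i + f j <= \sum_k f k.
Proof.
move=> ij; rewrite (bigD1 i) //= (bigD1 j) /=; last by rewrite eq_sym.
by rewrite addnA leq_addr.
Qed.

Lemma sum_indn n (i : 'I_n) c : \sum_(k < n) (k == i) * c = c.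
Proof.
rewrite (bigD1 i) //= eqxx mul1n big1 ?addn0 // => k /negbTE ->.
by rewrite mul0n.
Qed.

Lemma per_t n m (t : n.-tuple 'I_(2 * m).+1) : tsum t = (2 * m)%N ->
  [forall k, tnth t k <= m] + \sum_(k < n) (m < tnth t k) = 1.
Proof.
move=> st.
case: (boolP [exists k, m < tnth t k]) => [/existsP [k0 hk0] | ].
  have -> : [forall k, tnth t k <= m] = false.
    by apply: negbTE; apply/forallPn; exists k0; rewrite -ltnNge.
  rewrite add0n (bigD1 k0) //= hk0 big1 // => j hj.
  suff -> : (m < tnth t j) = false by [].
  apply: negbTE; apply/negP => hj'.
  have := @sum_two _ (fun k => nat_of_ord (tnth t k)) j k0 hj.
  rewrite -/(tsum t) st => h.
  have : (m.+1 + m.+1 <= 2 * m)%N.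
    apply: leq_trans h; exact: leq_add.
  lia.
rewrite negb_exists => /forallP hall.
have -> : [forall k, tnth t k <= m] by apply/forallP => k; rewrite leqNgt hall.
by rewrite big1 // => k _; rewrite (negbTE (hall k)).
Qed.

Lemma sum_in (T : finType) (A : {set T}) (P : pred T) :
  \sum_(t in A) (P t : nat) = #|[set t in A | P t]|.
Proof.
rewrite -sum1_card big_mkcond [RHS]big_mkcond /=.
by apply: eq_bigr => t _; rewrite inE; case: (t \in A); case: (P t).
Qed.

Lemma count_split n m :
  #|[set t : n.-tuple 'I_(2 * m).+1 | tsum t == (2 * m)%N]| =
  #|[set t : n.-tuple 'I_(2 * m).+1 | (tsum t == (2 * m)%N) && [forall k, tnth t k <= m]]|
  + \sum_(i < n) #|[set t : n.-tuple 'I_(2 * m).+1 | (tsum t == (2 * m)%N) && (m < tnth t i)]|.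
Proof.
set A := [set t : n.-tuple 'I_(2 * m).+1 | tsum t == (2 * m)%N].
rewrite -sum1_card.
transitivity (\sum_(t in A) ([forall k, tnth t k <= m] + \sum_(i < n) (m < tnth t i) : nat)).
  by apply: eq_bigr => t; rewrite inE => /eqP /per_t ->.
rewrite big_split /= exchange_big /= sum_in.
congr (_ + _).
  by apply: eq_card => t; rewrite !inE.
apply: eq_bigr => i _; rewrite sum_in.
by apply: eq_card => t; rewrite !inE.
Qed.

Lemma card_bad n m' (i : 'I_n.+1) :
  #|[set t : n.+1.-tuple 'I_(2 * m'.+1).+1 |
      (tsum t == (2 * m'.+1)%N) && (m'.+1 < tnth t i)]| = 'C(n + m', n).
Proof.
pose U := [set u : n.+1.-tuple 'I_m'.+1 | tsum u == m'].
have cU : #|U| = 'C(n + m', n).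
  by rewrite -card_ord_partitions; apply: eq_card => u; rewrite !inE tsumE.
pose f (u : n.+1.-tuple 'I_m'.+1) : n.+1.-tuple 'I_(2 * m'.+1).+1 :=
  [tuple (inord (tnth u k + (k == i) * m'.+2) : 'I_(2 * m'.+1).+1) | k < n.+1].
have fv u k : (tnth (f u) k : nat) = tnth u k + (k == i) * m'.+2.
  rewrite tnth_mktuple inordK //.
  have := ltn_ord (tnth u k); case: (k == i); lia.
have finj : injective f.
  move=> u v e; apply: eq_from_tnth => k; apply: val_inj => /=.
  have := fv u k; rewrite e fv; lia.
rewrite -cU -(card_imset _ finj).
apply: eq_card => t; rewrite inE; apply/idP/imsetP.
- case/andP => /eqP st hti.
  have bnd k : (tnth t k - (k == i) * m'.+2 < m'.+1)%N.
    case: (k =P i) => [-> | /eqP ki].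
      have := ltn_ord (tnth t i); lia.
    have := @sum_two _ (fun k => nat_of_ord (tnth t k)) k i ki.
    rewrite -/(tsum t) st /= mul0n subn0; lia.
  pose u : n.+1.-tuple 'I_m'.+1 :=
    [tuple (inord (tnth t k - (k == i) * m'.+2) : 'I_m'.+1) | k < n.+1].
  have uv k : (tnth u k : nat) = tnth t k - (k == i) * m'.+2.
    by rewrite tnth_mktuple inordK.
  have ge k : ((k == i) * m'.+2 <= tnth t k)%N.
    by case: (k =P i) => [->|_] /=; lia.
  exists u.
    rewrite inE; apply/eqP.
    have : tsum t = (\sum_(k < n.+1) (tnth u k : nat)) + m'.+2.
      rewrite /tsum -(@sum_indn _ i m'.+2) -big_split /=.
      by apply: eq_bigr => k _; rewrite uv subnK.
    rewrite st -/(tsum u); lia.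
  apply: eq_from_tnth => k; apply: val_inj => /=.
  by rewrite fv uv subnK.
- case=> u; rewrite inE => /eqP su ->.
  rewrite fv eqxx mul1n; apply/andP; split; last lia.
  apply/eqP; rewrite /tsum.
  under eq_bigr do rewrite fv.
  rewrite big_split /= sum_indn -/(tsum u) su; lia.
Qed.

Definition Good n m := [set t : n.-tuple 'I_(2 * m).+1 |
   (tsum t == (2 * m)%N) && [forall k, tnth t k <= m]].

Lemma good_count n m : (1 <= n)%N ->
  (#|Good n.+1 m| + n.+1 * 'C(n + m - 1, n) = 'C(n + 2 * m, n))%N.
Proof.
move=> n1.
have cA : #|[set t : n.+1.-tuple 'I_(2 * m).+1 | tsum t == (2 * m)%N]| = 'C(n + 2 * m, n).
  by rewrite -card_ord_partitions; apply: eq_card => t; rewrite !inE tsumE.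
rewrite -cA count_split /Good; clear cA; congr (_ + _).
case: m => [|m'].
  rewrite addn0 bin_small; last by lia.
  rewrite muln0 big1 // => i _; apply: eq_card0 => t; rewrite inE.
  apply/negP => /andP [_ h]; have := ltn_ord (tnth t i); move: h; move: (nat_of_ord (tnth t i)) => v; lia.
rewrite (eq_bigr (fun _ => 'C(n + m', n))); last by move=> i _; rewrite card_bad.
rewrite sum_nat_const card_ord; congr (_ * 'C(_, _)); lia.
Qed.

Lemma prod1 n m : (\prod_(0 <= i < n) (2 * m + i.+1) = 'C(n + 2 * m, n) * n`!)%N.
Proof.
rewrite bin_ffact ffact_prod -(big_mkord xpredT (fun i => n + 2 * m - i))%N.
rewrite big_nat_rev; apply: eq_big_nat => i /andP [_ hi] /=; lia.
Qed.

Lemma prod2 n m : (1 <= n)%N ->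
  (\prod_(0 <= i < n) (m + i) = 'C(n + m - 1, n) * n`!)%N.
Proof.
move=> n1.
rewrite bin_ffact ffact_prod -(big_mkord xpredT (fun i => n + m - 1 - i))%N.
rewrite big_nat_rev; apply: eq_big_nat => i /andP [_ hi] /=; lia.
Qed.

Local Open Scope ring_scope.

Lemma qp_nat n m : (1 <= n)%N -> (qp n).[m%:R] = (#|Good n.+1 m|)%:R.
Proof.
move=> n1; rewrite qp_horner.
have e1 : \prod_(0 <= i < n) ((m%:R : algC) *+ 2 + i.+1%:R) = ('C(n + 2 * m, n) * n`!)%:R.
  rewrite -prod1 natr_prod; apply: eq_bigr => i _.
  by rewrite natrD natrM mulr_natl.
have e2 : \prod_(0 <= i < n) ((m%:R : algC) + i%:R) = ('C(n + m - 1, n) * n`!)%:R.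
  by rewrite -(prod2 n m n1) natr_prod; apply: eq_bigr => i _; rewrite natrD.
rewrite e1 e2 -(good_count n m n1) !natrM natrD.
have f0 : (n`!%:R : algC) != 0 by rewrite pnatr_eq0 -lt0n fact_gt0.
by field.
Qed.

Lemma poly_eq_nat (p q : {poly algC}) : (forall m : nat, p.[m%:R] = q.[m%:R]) -> p = q.
Proof.
move=> H; apply/eqP; rewrite -subr_eq0; apply/negP => nz.
pose rs := [seq (i%:R : algC) | i <- iota 0 (size (p - q))].
have h1 : all (root (p - q)) rs.
  by apply/allP => y /mapP [i _ ->]; rewrite rootE !hornerE H subrr.
have h2 : uniq rs.
  by rewrite map_inj_uniq ?iota_uniq // => i j /eqP; rewrite eqr_nat => /eqP.
have := @max_poly_roots _ (p - q) rs (introN idP nz) h1 h2.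
by rewrite size_map size_iota ltnn.
Qed.

Definition gmap n m (t : n.-tuple 'I_(2 * m).+1) : {ffun 'I_n -> int} :=
  [ffun k => ((tnth t k : nat) : int)].

Lemma gmap_inj n m : injective (@gmap n m).
Proof.
move=> t u e; apply: eq_from_tnth => k; apply: val_inj.
by have := congr1 (fun f : {ffun 'I_n -> int} => f k) e; rewrite /gmap !ffunE => -[].
Qed.

Lemma lp_iff (R : realType) n m (x : {ffun 'I_n.+1 -> int}) : (1 <= n)%N ->
  @lattice_point_Kd R n.+1 m x <-> x \in map (@gmap n.+1 m) (enum (Good n.+1 m)).
Proof.
move=> n1; split.
- move/lp_fwd => [Hb Hs].
  have xabs k : (`|x k|%N)%:Z = x k by rewrite gez0_abs //; case/andP: (Hb k).
  have xle k : (`|x k|%N <= m)%N by rewrite -lez_nat xabs; case/andP: (Hb k).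
  pose t := [tuple (inord `|x k|%N : 'I_(2 * m).+1) | k < n.+1].
  have tv k : (tnth t k : nat) = `|x k|%N.
    by rewrite tnth_mktuple inordK // ltnS; apply: leq_trans (xle k) _; lia.
  apply/mapP; exists t.
    rewrite mem_enum inE; apply/andP; split.
      apply/eqP; rewrite /tsum; apply/eqP; rewrite -eqz_nat -Hs.
      rewrite (big_morph Posz PoszD (erefl _)).
      by apply/eqP/eq_bigr => k _; rewrite tv xabs.
    by apply/forallP => k; rewrite tv xle.
  by apply/ffunP => k; rewrite ffunE tv xabs.
- move=> /mapP [t]; rewrite mem_enum inE => /andP [/eqP st /forallP ht] ->.
  apply: lp_bwd; first by lia.
    by move=> k; rewrite ffunE /= lez_nat ht.
  rewrite -st /tsum (big_morph Posz PoszD (erefl _)).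
  by apply: eq_bigr => k _; rewrite ffunE.
Qed.

Theorem proposition1p2 (R : realType) (d : nat) (p : {poly algC}) (alpha : algC) :
  (3 <= d)%N ->
  is_ehrhart_poly_Kd R d p ->
  root p alpha ->
  (d = 3%N -> alpha = -1 \/ alpha = -2) /\
  ((4 <= d)%N -> - (d%:R / 2) < 'Re alpha /\ 'Re alpha < 0).
Proof.
case: d => // n d3 He.
have n1 : (1 <= n)%N by lia.
have -> : p = qp n.
  apply: poly_eq_nat => m.
  have [s [us Hs ->]] := He m.
  rewrite qp_nat //; congr (_%:R).
  have pe : perm_eq s (map (@gmap n.+1 m) (enum (Good n.+1 m))).
    apply: uniq_perm => //.
      by rewrite map_inj_uniq ?enum_uniq //; exact: gmap_inj.
    move=> x; apply/idP/idP.
      by move/Hs; move/(lp_iff R n m x n1).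
    by move/(lp_iff R n m x n1)/Hs.
  by rewrite (perm_size pe) size_map -cardE.
clear He; move=> hr; split.
  by case=> e; subst n; exact: roots3.
move=> d4; split.
  case: n d3 n1 hr d4 => // k _ _ hr d4.
  by apply: re_gt => //; lia.
exact: (re_neg n alpha n1 hr).
Qed.
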